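(* Let $f:\mathcal{X}\to\Delta^{k-1}$ be a classifier outputting confidence vectors, and let $x^{(1)},\dots,x^{(n)}\in\mathcal{X}$ be (unlabeled) samples. Let $f_\# P(c)=\frac1n\sum_{i=1}^n\delta_{f(x^{(i)})}$ be the empirical distribution of confidence vectors, and let $P_{\mathrm{pseudo}}(y)=\frac1n\sum_{i=1}^n\delta_{y^{(i)}}$, where $y^{(i)}\in\{0,1\}^k\cap\Delta^{k-1}$ is the one-hot pseudo-label with $y^{(i)}_j=\mathbb{1}[j=\arg\max_{j'} f_{j'}(x^{(i)})]$. Define the average-confidence error estimate $\hat\epsilon_{\mathrm{AC}}=\frac1n\sum_{i=1}^n\bigl(1-\max_j f_j(x^{(i)})\bigr)$. Then $$\hat\epsilon_{\mathrm{AC}}=W_\infty\bigl(f_\# P(c),\,P_{\mathrm{pseudo}}(y)\bigr).$$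
   Context: $\Delta^{k-1}=\{c\in\mathbb{R}^k: c_j\ge 0,\ \sum_j c_j=1\}$ is the probability simplex. For probability distributions $P,Q$ on $\mathbb{R}^k$, $W_\infty(P,Q)=\inf_{\pi\in\Pi(P,Q)}\int\|u-v\|_\infty\,d\pi(u,v)$, where $\Pi(P,Q)$ is the set of couplings of $P$ and $Q$; i.e. $W_\infty$ denotes the Wasserstein (optimal transport) distance with ground cost $c(u,v)=\|u-v\|_\infty$ (not the usual $\infty$-Wasserstein distance). Ties in $\arg\max$ are broken by a fixed rule (e.g. smallest index). *)

(* Defs.v *)
From HB Require Import structures.
From mathcomp Require Import all_boot all_order all_algebra.
From mathcomp Require Import boolp classical_sets reals.
Set Implicit Arguments. Unset Strict Implicit. Unset Printing Implicit Defensive.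
Import Order.TTheory GRing.Theory Num.Theory.
Local Open Scope ring_scope.
Local Open Scope classical_set_scope.

Section Defs.
Variables (R : realType) (k : nat).
Local Notation V := 'rV[R]_k.

Definition simplex (c : V) : Prop :=
  (forall j, 0 <= c 0 j) /\ \sum_j c 0 j = 1.

(* max_j c_j (default 0; exact for vectors with nonnegative entries) *)
Definition maxc (c : V) : R := \big[Num.max/0]_(j < k) c 0 j.

Definition linf (u v : V) : R := \big[Num.max/0]_(j < k) `|u 0 j - v 0 j|.

Definition first_argmax (c : V) (j : 'I_k) : bool :=
  [forall i, c 0 i <= c 0 j] && [forall i : 'I_k, (val i < val j)%N ==> (c 0 i < c 0 j)].

Definition onehot (c : V) : V := \row_j (if first_argmax c j then 1 else 0).

(* discrete (finitely supported) distributions on R^k as mass functions *)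
Definition empirical (n : nat) (pts : 'I_n -> V) : V -> R :=
  fun v => (#|[set i | pts i == v]|)%:R / n%:R.

(* pi is a (finitely supported) coupling of p and q, with support listed in S *)
Definition is_coupling (p q : V -> R) (pi : V -> V -> R) (S : seq (V * V)) : Prop :=
  [/\ uniq S,
      (forall u v, pi u v != 0 -> (u, v) \in S),
      (forall u v, 0 <= pi u v),
      (forall u, \sum_(s <- S | s.1 == u) pi s.1 s.2 = p u) &
      (forall v, \sum_(s <- S | s.2 == v) pi s.1 s.2 = q v)].

Definition coupling_cost (pi : V -> V -> R) (S : seq (V * V)) : R :=
  \sum_(s <- S) pi s.1 s.2 * linf s.1 s.2.

(* optimal transport distance with ground cost ||u - v||_infty *)
Definition W_inf (p q : V -> R) : R :=
  inf [set c | exists pi S, is_coupling p q pi S /\ c = coupling_cost pi S].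

Definition eps_AC (X : Type) (f : X -> V) (n : nat) (x : 'I_n -> X) : R :=
  (\sum_(i < n) (1 - maxc (f (x i)))) / n%:R.

End Defs.

(* Main.v *)
Require Import Defs.
From HB Require Import structures.
From mathcomp Require Import all_boot all_order all_algebra.
From mathcomp Require Import boolp classical_sets reals.
From mathcomp Require Import lra.
Set Implicit Arguments. Unset Strict Implicit. Unset Printing Implicit Defensive.
Import Order.TTheory GRing.Theory Num.Theory.
Local Open Scope ring_scope.

Section Aux.
Variables (R : realType) (k : nat).
Local Notation V := 'rV[R]_k.

Lemma sum_pick (T : eqType) (U : seq T) (a : T) (F : T -> R) :
  uniq U -> a \in U -> \sum_(u <- U) (a == u)%:R * F u = F a.
Proof.
move=> uU aU; rewrite (bigD1_seq a) //= eqxx mul1r big1 ?addr0 //.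
by move=> u; rewrite eq_sym => /negbTE ->; rewrite mul0r.
Qed.

Lemma bigmax_ge m0 (F : 'I_m0 -> R) (x0 : R) j :
  F j <= \big[Num.max/x0]_(i < m0) F i.
Proof. by rewrite (bigD1 j) //= le_max lexx. Qed.

Lemma bigmax_le m0 (F : 'I_m0 -> R) (x0 m : R) :
  x0 <= m -> (forall i, F i <= m) -> \big[Num.max/x0]_(i < m0) F i <= m.
Proof.
move=> h0 hF; elim/big_ind: _ => //.
by move=> a b ha hb; rewrite ge_max ha hb.
Qed.

Lemma first_argmax_ex (c : V) : simplex c -> exists j, first_argmax c j.
Proof.
case=> c0 c1.
case: k c c0 c1 => [|k'] c c0 c1.
  by move: c1; rewrite big_ord0 => /eqP; rewrite eq_sym oner_eq0.
pose P := fun i : 'I_k'.+1 => [forall t, c 0 t <= c 0 i].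
have [j0 Pj0] : exists j0, P j0.
  pose m := \big[Num.max/0]_(i < k'.+1) c 0 i.
  have : exists j, m <= c 0 j.
    rewrite /m; elim/big_rec: _ => [|i x _ [j hj]].
      by exists ord0; apply: c0.
    case: (lerP (c 0 i) x) => hx.
      by exists j.
    by exists i.
  case=> j hj; exists j; apply/forallP => t.
  by apply: le_trans hj; apply: (bigmax_ge (fun i => c 0 i)).
case: (arg_minnP (fun i : 'I_k'.+1 => val i) Pj0) => j Pj hmin.
exists j; apply/andP; split=> //; apply/forallP => i; apply/implyP => hij.
rewrite ltNge; apply/negP => hji.
have Pi : P i.
  apply/forallP => t; apply: le_trans hji; exact: (forallP Pj).
by move: (hmin i Pi); rewrite leqNgt hij.
Qed.

Lemma first_argmax_uniq (c : V) j j' :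
  first_argmax c j -> first_argmax c j' -> j = j'.
Proof.
rewrite /first_argmax.
move=> /andP[/forallP h1 /forallP h2] /andP[/forallP h1' /forallP h2'].
case: (ltngtP (val j) (val j')) => hlt; last exact: val_inj.
  by move: (implyP (h2' j) hlt); rewrite ltNge h1.
by move: (implyP (h2 j') hlt); rewrite ltNge h1'.
Qed.

Lemma onehotE (c : V) j i : first_argmax c j ->
  onehot c 0 i = if i == j then 1 else 0.
Proof.
move=> hj; rewrite mxE; case: (eqVneq i j) => [->|ne]; first by rewrite hj.
case: ifP => // hi; by move: ne; rewrite (first_argmax_uniq hi hj) eqxx.
Qed.

Lemma linf_lb (u v : V) j : v 0 j = 1 -> 1 - maxc u <= linf u v.
Proof.
move=> vj; apply: (@le_trans _ _ (`|u 0 j - v 0 j|)).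
  rewrite vj; apply: (@le_trans _ _ (1 - u 0 j)).
    by rewrite lerD2l lerN2; apply: (bigmax_ge (fun i => u 0 i)).
  by rewrite -normrN opprB ler_norm.
exact: (bigmax_ge (fun i => `|u 0 i - v 0 i|)).
Qed.

Lemma linf_onehot (c : V) : simplex c -> linf c (onehot c) = 1 - maxc c.
Proof.
move=> sc; have [j hj] := first_argmax_ex sc.
case: sc => c0 c1.
have mx : maxc c = c 0 j.
  apply/le_anti; rewrite (bigmax_ge (fun i => c 0 i)) andbT.
  apply: bigmax_le => // i; move/andP: hj => [/forallP h _]; exact: h.
have cjle : forall i, i != j -> c 0 i + c 0 j <= 1.
  move=> i ij; rewrite -c1 (bigD1 j) //= addrC lerD2r (bigD1 i) ?ij //=.
  rewrite lerDl; apply: sumr_ge0 => l _; exact: c0.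
have cj1 : c 0 j <= 1.
  rewrite -c1 (bigD1 j) //= lerDl; apply: sumr_ge0 => l _; exact: c0.
rewrite mx; apply/le_anti/andP; split.
  apply: bigmax_le; first by rewrite subr_ge0.
  move=> i; rewrite (onehotE i hj); case: eqP => [->|/eqP ne].
    by rewrite -normrN opprB ger0_norm ?subr_ge0.
  rewrite subr0 ger0_norm //; have := cjle i ne; lra.
rewrite /linf; apply: (le_trans _ (bigmax_ge (fun i => `|c 0 i - onehot c 0 i|) _ j)).
by rewrite (onehotE j hj) eqxx -normrN opprB ler_norm.
Qed.

Lemma empE n (pts : 'I_n -> V) u :
  empirical pts u = (\sum_i (pts i == u)%:R) / n%:R.
Proof.
rewrite /empirical; congr (_ / _).
rewrite -sum1_card natr_sum [RHS]big_mkcond /=.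
rewrite big_mkcond /=; apply: eq_bigr => i _; by rewrite [i \in _]asboolb; case: (pts i == u).
Qed.

Lemma marg1_sum n (pts : 'I_n -> V) q (pi : V -> V -> R) S (g : V -> R) :
  is_coupling (empirical pts) q pi S ->
  \sum_(s <- S) pi s.1 s.2 * g s.1 = (\sum_i g (pts i)) / n%:R.
Proof.
case=> uS _ _ m1 _.
pose U := undup ([seq s.1 | s <- S] ++ [seq pts i | i <- enum 'I_n]).
have uU : uniq U by apply: undup_uniq.
transitivity (\sum_(s <- S) \sum_(u <- U) (s.1 == u)%:R * (pi s.1 s.2 * g u)).
  rewrite big_seq [RHS]big_seq; apply: eq_bigr => s sS.
  rewrite (sum_pick (fun u => pi s.1 s.2 * g u)) //.
  by rewrite mem_undup mem_cat map_f.
rewrite exchange_big /=.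
transitivity (\sum_(u <- U) g u * empirical pts u).
  apply: eq_bigr => u _; rewrite -m1 big_distrr /= [RHS]big_mkcond /=.
  apply: eq_bigr => s _; case: (s.1 == u); rewrite /= ?mul1r ?mul0r ?mulr0 //.
  by rewrite mulrC.
transitivity (\sum_(u <- U) (\sum_(i < n) (pts i == u)%:R * g u) / n%:R).
  apply: eq_bigr => u _; rewrite empE mulrA mulr_sumr; congr (_ / _).
  by apply: eq_bigr => i _; rewrite mulrC.
rewrite -big_distrl /= exchange_big /=; congr (_ / _).
apply: eq_bigr => i _.
rewrite -(sum_pick (fun u => g u) uU); last first.
  by rewrite mem_undup mem_cat orbC map_f // mem_enum.
by apply: eq_bigr => u _; rewrite mulrC.
Qed.

End Aux.

Theorem mainTheorem1 (R : realType) (k n : nat) (X : Type)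
  (f : X -> 'rV[R]_k) (x : 'I_n -> X)
  (hf : forall z, simplex (f z)) (hn : (0 < n)%N) :
  eps_AC f x =
  W_inf (empirical (fun i => f (x i))) (empirical (fun i => onehot (f (x i)))).
Proof.
set pts := fun i => f (x i).
set p := empirical pts.
set q := empirical (fun i => onehot (pts i)).
have epsE : eps_AC f x = (\sum_i (1 - maxc (pts i))) / n%:R by [].
set E := [set c | exists pi S, is_coupling p q pi S /\ c = coupling_cost pi S]%classic.
have lbE : lbound E (eps_AC f x).
  move=> c [pi [S [hc ->]]].
  have hc' := hc; case: hc' => uS _ pi0 _ m2.
  rewrite epsE -(marg1_sum (fun u => 1 - maxc u) hc) /coupling_cost.
  rewrite big_seq [X in _ <= X]big_seq; apply: ler_sum => s sS.
  have [z0|nz] := eqVneq (pi s.1 s.2) 0; first by rewrite z0 !mul0r.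
  apply: ler_wpM2l; first exact: pi0.
  have qpos : 0 < q s.2.
    rewrite -m2 big_mkcond (bigD1_seq s) //= eqxx.
    apply: (lt_le_trans (y := pi s.1 s.2)); first by rewrite lt0r nz pi0.
    rewrite lerDl; apply: sumr_ge0 => t _; case: ifP => // _; exact: pi0.
  case: (pickP (fun i => onehot (pts i) == s.2)) => [i /eqP hi|none].
    have [j hj] := first_argmax_ex (hf (x i)).
    apply: (@linf_lb R k s.1 s.2 j); by rewrite -hi (onehotE j hj) eqxx.
  move: qpos; rewrite /q empE big1 ?mul0r ?ltxx // => i _.
  by rewrite none.
pose pi := fun u v : 'rV[R]_k => (v == onehot u)%:R * p u.
pose S := undup [seq (pts i, onehot (pts i)) | i <- enum 'I_n].
have inS : forall i, (pts i, onehot (pts i)) \in S.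
  by move=> i; rewrite mem_undup map_f // mem_enum.
have Sform : forall s, s \in S -> exists i, s = (pts i, onehot (pts i)).
  move=> s; rewrite mem_undup => /mapP [i _ ->]; by exists i.
have K : forall i (G : 'rV[R]_k * 'rV[R]_k -> R),
    \sum_(s <- S) (pts i == s.1)%:R * G s = G (pts i, onehot (pts i)).
  move=> i G; rewrite -(sum_pick G (undup_uniq _) (inS i)).
  rewrite big_seq [RHS]big_seq; apply: eq_bigr => s sS.
  have [j ->] := Sform s sS; congr (_%:R * _) => /=.
  rewrite xpair_eqE; case: eqP => [->|] /=; by rewrite ?eqxx.
have Sum : forall G : 'rV[R]_k * 'rV[R]_k -> R,
    \sum_(s <- S) G s * pi s.1 s.2 = (\sum_i G (pts i, onehot (pts i))) / n%:R.
  move=> G.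
  transitivity (\sum_(s <- S) (\sum_i (pts i == s.1)%:R * G s) / n%:R).
    rewrite big_seq [RHS]big_seq; apply: eq_bigr => s sS.
    have [j ->] := Sform s sS; rewrite /pi /= eqxx mul1r /p empE mulrA mulr_sumr.
    by congr (_ / _); apply: eq_bigr => i _; rewrite mulrC.
  rewrite -big_distrl /= exchange_big /=; congr (_ / _).
  by apply: eq_bigr => i _; rewrite K.
have filt : forall (P : pred ('rV[R]_k * 'rV[R]_k)),
    \sum_(s <- S | P s) pi s.1 s.2 = \sum_(s <- S) (P s)%:R * pi s.1 s.2.
  move=> P; rewrite big_mkcond; apply: eq_bigr => s _.
  by case: (P s); rewrite ?mul1r ?mul0r.
have coup : is_coupling p q pi S.
  split.
  - exact: undup_uniq.
  - move=> u v; rewrite /pi; case: (eqVneq v (onehot u)) => [->|ne]; last first.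
      by rewrite mul0r eqxx.
    rewrite ?eqxx mul1r => nz.
    case: (pickP (fun i => pts i == u)) => [i /eqP <-|none]; first exact: inS.
    by move: nz; rewrite /p empE big1 ?mul0r ?eqxx // => i _; rewrite none.
  - move=> u v; apply: mulr_ge0; first exact: ler0n.
    by rewrite /p /empirical divr_ge0 // ler0n.
  - move=> u; rewrite filt (Sum (fun s => (s.1 == u)%:R)) /p empE.
    by [].
  - move=> v; rewrite filt (Sum (fun s => (s.2 == v)%:R)) /q empE.
    by [].
have memE : E (eps_AC f x).
  exists pi, S; split => //.
  rewrite /coupling_cost epsE; symmetry.
  transitivity (\sum_(s <- S) linf s.1 s.2 * pi s.1 s.2).
    by apply: eq_bigr => s _; rewrite mulrC.
  rewrite Sum; congr (_ / _); apply: eq_bigr => i _ /=.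
  exact: (linf_onehot (hf (x i))).
rewrite /W_inf -/p -/q -/E.
apply/le_anti/andP; split.
  apply: lb_le_inf => //; by exists (eps_AC f x).
have := @ge_inf R E; apply => //; by exists (eps_AC f x).
Qed.
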